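(* Let $\overrightarrow{U}(t)$ be a closed unit timelike dual curve in the 3-dimensional dual Lorentzian space with dual Frenet frame $\{\overrightarrow{U_1},\overrightarrow{U_2},\overrightarrow{U_3}\}$, dual curvature $\kappa$ and dual torsion $\tau$, let $\Phi=\varphi+\varepsilon\varphi^*$ be a constant dual number, let $(V_1)$ be the parallel ruled surface of $(U_1)$, corresponding to $\overrightarrow{V_1}=\cosh\Phi\,\overrightarrow{U_1}+\sinh\Phi\,\overrightarrow{U_3}$, and let $(V_2)$ be the closed ruled surface corresponding to $\overrightarrow{V_2}=\overrightarrow{U_2}$. With $P=p+\varepsilon p^*=\kappa\cosh\Phi+\tau\sinh\Phi$ and $Q=q+\varepsilon q^*=-\kappa\sinh\Phi-\tau\cosh\Phi$, the pitch, the dual angle of pitch and the drall of $(V_2)$ are $$L_{V_2}=0,\qquad \Lambda_{V_2}=0,\qquad P_{V_2}=\frac{qq^*-pp^*}{q^2-p^2}.$$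
   Context: Dual numbers are $\lambda+\varepsilon\lambda^*$ with $\lambda,\lambda^*\in\mathbb{R}$ and $\varepsilon^2=0$; dual vectors are $\overrightarrow{A}=\overrightarrow{a}+\varepsilon\overrightarrow{a}^*$ with $\overrightarrow{a},\overrightarrow{a}^*\in\mathbb{R}^3$. The Lorentzian inner product on $\mathbb{R}^3$ is $\langle a,b\rangle=-a_1b_1+a_2b_2+a_3b_3$, extended to dual vectors by $\langle \overrightarrow{A},\overrightarrow{B}\rangle=\langle\overrightarrow{a},\overrightarrow{b}\rangle+\varepsilon(\langle\overrightarrow{a},\overrightarrow{b}^*\rangle+\langle\overrightarrow{a}^*,\overrightarrow{b}\rangle)$. For a dual number $\Phi=\varphi+\varepsilon\varphi^*$: $\sinh\Phi=\sinh\varphi+\varepsilon\varphi^*\cosh\varphi$, $\cosh\Phi=\cosh\varphi+\varepsilon\varphi^*\sinh\varphi$. The closed unit timelike dual curve $\overrightarrow{U}(t)$ (integrals $\oint$ over one closed period of $t$) has Frenet frame $\overrightarrow{U_1}=\overrightarrow{U}$ (timelike), $\overrightarrow{U_2},\overrightarrow{U_3}$ (spacelike), mutually orthogonal unit dual vectors, satisfying $\overrightarrow{U_1}'=\kappa\overrightarrow{U_2}$, $\overrightarrow{U_2}'=\kappa\overrightarrow{U_1}-\tau\overrightarrow{U_3}$, $\overrightarrow{U_3}'=\tau\overrightarrow{U_2}$. Set $\overrightarrow{V_3}=-\sinh\Phi\,\overrightarrow{U_1}-\cosh\Phi\,\overrightarrow{U_3}$; then $\overrightarrow{V_1}'=P\overrightarrow{V_2}$,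 $\overrightarrow{V_2}'=P\overrightarrow{V_1}-Q\overrightarrow{V_3}$, $\overrightarrow{V_3}'=Q\overrightarrow{V_2}$. Write $\overrightarrow{V_i}=\overrightarrow{v_i}+\varepsilon\overrightarrow{v_i}^*$. The dual Steiner vector is taken (frame vectors written outside the integrals) as $\overrightarrow{D}=\overrightarrow{d}+\varepsilon\overrightarrow{d}^*=\overrightarrow{U_1}\oint\tau\,dt-\overrightarrow{U_3}\oint\kappa\,dt=-\overrightarrow{V_1}\oint Q\,dt+\overrightarrow{V_3}\oint P\,dt$, so $\overrightarrow{d}=-\overrightarrow{v_1}\oint q\,dt+\overrightarrow{v_3}\oint p\,dt$, $\overrightarrow{d}^*=-\overrightarrow{v_1}\oint q^*dt-\overrightarrow{v_1}^*\oint q\,dt+\overrightarrow{v_3}\oint p^*dt+\overrightarrow{v_3}^*\oint p\,dt$. For the closed ruled surface corresponding to a unit dual curve $\overrightarrow{X}=\overrightarrow{x}+\varepsilon\overrightarrow{x}^*$: pitch $L_X=\langle\overrightarrow{d},\overrightarrow{x}^*\rangle+\langle\overrightarrow{d}^*,\overrightarrow{x}\rangle$, dual angle of pitch $\Lambda_X=-\langle\overrightarrow{D},\overrightarrow{X}\rangle$, drall $P_X=\langle d\overrightarrow{x},d\overrightarrow{x}^*\rangle/\langle d\overrightarrow{x},d\overrightarrow{x}\rangle$. *)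

(* Defs.v *)
From Stdlib Require Import Reals.
From Coquelicot Require Import Coquelicot.
Open Scope R_scope.

Record vec3 := V3 { x1 : R; x2 : R; x3 : R }.
Definition lor (a b : vec3) : R := - x1 a * x1 b + x2 a * x2 b + x3 a * x3 b.
Definition vadd (a b : vec3) : vec3 := V3 (x1 a + x1 b) (x2 a + x2 b) (x3 a + x3 b).
Definition vscal (r : R) (a : vec3) : vec3 := V3 (r * x1 a) (r * x2 a) (r * x3 a).
Definition vopp (a : vec3) : vec3 := vscal (-1) a.

Record dnum := Dn { re : R; du : R }.
Definition dconst (r : R) : dnum := Dn r 0.
Definition dadd (a b : dnum) : dnum := Dn (re a + re b) (du a + du b).
Definition dopp (a : dnum) : dnum := Dn (- re a) (- du a).
Definition dmul (a b : dnum) : dnum := Dn (re a * re b) (re a * du b + du a * re b).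
Definition dsinh (F : dnum) : dnum := Dn (sinh (re F)) (du F * cosh (re F)).
Definition dcosh (F : dnum) : dnum := Dn (cosh (re F)) (du F * sinh (re F)).

Record dvec := Dv { vr : vec3; vd : vec3 }.
Definition dvadd (A B : dvec) : dvec := Dv (vadd (vr A) (vr B)) (vadd (vd A) (vd B)).
Definition dvopp (A : dvec) : dvec := Dv (vopp (vr A)) (vopp (vd A)).
Definition dvscal (L : dnum) (A : dvec) : dvec :=
  Dv (vscal (re L) (vr A)) (vadd (vscal (re L) (vd A)) (vscal (du L) (vr A))).
Definition dlor (A B : dvec) : dnum :=
  Dn (lor (vr A) (vr B)) (lor (vr A) (vd B) + lor (vd A) (vr B)).

Definition is_vderive (f : R -> vec3) (t : R) (l : vec3) : Prop :=
  is_derive (fun s => x1 (f s)) t (x1 l) /\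
  is_derive (fun s => x2 (f s)) t (x2 l) /\
  is_derive (fun s => x3 (f s)) t (x3 l).
Definition is_dvderive (X : R -> dvec) (t : R) (L : dvec) : Prop :=
  is_vderive (fun s => vr (X s)) t (vr L) /\ is_vderive (fun s => vd (X s)) t (vd L).
Definition vDerive (f : R -> vec3) (t : R) : vec3 :=
  V3 (Derive (fun s => x1 (f s)) t) (Derive (fun s => x2 (f s)) t)
     (Derive (fun s => x3 (f s)) t).

Definition dint (T : R) (f : R -> dnum) : dnum :=
  Dn (RInt (fun s => re (f s)) 0 T) (RInt (fun s => du (f s)) 0 T).

(** Dual Steiner vector at parameter t (frame vectors outside the integrals):
    D = U1 * oint tau - U3 * oint kappa. *)
Definition steiner (T : R) (kappa tau : R -> dnum) (U1 U3 : R -> dvec) (t : R) : dvec :=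
  dvadd (dvscal (dint T tau) (U1 t)) (dvopp (dvscal (dint T kappa) (U3 t))).

Definition pitch (D X : dvec) : R := lor (vr D) (vd X) + lor (vd D) (vr X).
Definition pitch_angle (D X : dvec) : dnum := dopp (dlor D X).
(** drall  P_X = <dx, dx*> / <dx, dx>  (dt cancels) *)
Definition drall (X : R -> dvec) (t : R) : R :=
  lor (vDerive (fun s => vr (X s)) t) (vDerive (fun s => vd (X s)) t) /
  lor (vDerive (fun s => vr (X s)) t) (vDerive (fun s => vr (X s)) t).

(* Main.v *)
Require Import Defs.
From Stdlib Require Import Reals Lra Psatz.
From Coquelicot Require Import Coquelicot.
Open Scope R_scope.

Lemma ch_sh f : cosh f * cosh f - sinh f * sinh f = 1.
Proof. unfold cosh, sinh. assert (H: exp f * exp (-f) = 1).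
 { rewrite <- exp_plus. replace (f + -f) with 0 by ring. apply exp_0. }
 field_simplify. nra. Qed.

Lemma vDerive_eq f t l : is_vderive f t l -> vDerive f t = l.
Proof. intros [H1 [H2 H3]]. unfold vDerive.
 destruct l; simpl in *; f_equal; apply is_derive_unique; assumption. Qed.


Theorem theorem2p2 (U1 U2 U3 : R -> dvec) (kappa tau : R -> dnum) (T : R) (Phi : dnum) :
  0 < T ->
  (* closed: periodic curve and curvatures *)
  (forall t, U1 (t + T) = U1 t) ->
  (forall t, kappa (t + T) = kappa t) ->
  (forall t, tau (t + T) = tau t) ->
  (* Frenet frame: U1 unit timelike, U2, U3 unit spacelike, mutually orthogonal *)
  (forall t, dlor (U1 t) (U1 t) = dconst (-1)) ->
  (forall t, dlor (U2 t) (U2 t) = dconst 1) ->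
  (forall t, dlor (U3 t) (U3 t) = dconst 1) ->
  (forall t, dlor (U1 t) (U2 t) = dconst 0) ->
  (forall t, dlor (U1 t) (U3 t) = dconst 0) ->
  (forall t, dlor (U2 t) (U3 t) = dconst 0) ->
  (* Frenet equations *)
  (forall t, is_dvderive U1 t (dvscal (kappa t) (U2 t))) ->
  (forall t, is_dvderive U2 t
     (dvadd (dvscal (kappa t) (U1 t)) (dvopp (dvscal (tau t) (U3 t))))) ->
  (forall t, is_dvderive U3 t (dvscal (tau t) (U2 t))) ->
  let V1 := fun t => dvadd (dvscal (dcosh Phi) (U1 t)) (dvscal (dsinh Phi) (U3 t)) in
  let V2 := U2 in
  let P := fun t => dadd (dmul (kappa t) (dcosh Phi)) (dmul (tau t) (dsinh Phi)) in
  let Q := fun t => dopp (dadd (dmul (kappa t) (dsinh Phi)) (dmul (tau t) (dcosh Phi))) in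
  forall t,
    let D := steiner T kappa tau U1 U3 t in
    pitch D (V2 t) = 0 /\
    pitch_angle D (V2 t) = dconst 0 /\
    drall V2 t =
      (re (Q t) * du (Q t) - re (P t) * du (P t)) / (re (Q t) ^ 2 - re (P t) ^ 2).
Proof.
  intros HT _ _ _ H11 H22 H33 H12 H13 H23 _ D2 _ V1 V2 P Q t D.
  specialize (H11 t); specialize (H22 t); specialize (H33 t);
  specialize (H12 t); specialize (H13 t); specialize (H23 t).
  destruct (D2 t) as [Dr Dd].
  apply vDerive_eq in Dr; apply vDerive_eq in Dd.
  unfold D, V2, steiner, drall, pitch, pitch_angle, P, Q. clear D2.
  rewrite Dr, Dd. clear Dr Dd.
  set (a := dint T tau). set (b := dint T kappa). clearbody a b.
  destruct (U1 t) as [[u1 u2 u3] [u1' u2' u3']].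
  destruct (U2 t) as [[v1 v2 v3] [v1' v2' v3']].
  destruct (U3 t) as [[w1 w2 w3] [w1' w2' w3']].
  destruct (kappa t) as [k ks]. destruct (tau t) as [ta ts].
  destruct a as [a a']. destruct b as [b b']. destruct Phi as [f fs].
  unfold dlor, dconst, lor in *; simpl in *.
  injection H11 as E1 E1'. injection H22 as E2 E2'. injection H33 as E3 E3'.
  injection H12 as E4 E4'. injection H13 as E5 E5'. injection H23 as E6 E6'.
  split; [|split].
  - pose proof (f_equal (Rmult a) E4'). pose proof (f_equal (Rmult a') E4).
    pose proof (f_equal (Rmult b) E6'). pose proof (f_equal (Rmult b') E6). lra.
  - unfold dopp, dconst; cbn [re du]; f_equal.
    + pose proof (f_equal (Rmult a) E4). pose proof (f_equal (Rmult b) E6). lra.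
    + pose proof (f_equal (Rmult a) E4'). pose proof (f_equal (Rmult a') E4).
      pose proof (f_equal (Rmult b) E6'). pose proof (f_equal (Rmult b') E6). lra.
  - assert (HC := ch_sh f). set (c := cosh f) in *. set (s := sinh f) in *.
    f_equal.
    + pose proof (f_equal (Rmult (k*k)) E1'). pose proof (f_equal (Rmult (k*ks)) E1).
      pose proof (f_equal (Rmult (k*ta)) E5'). pose proof (f_equal (Rmult (k*ts)) E5).
      pose proof (f_equal (Rmult (ta*ks)) E5). pose proof (f_equal (Rmult (ta*ta)) E3').
      pose proof (f_equal (Rmult (ta*ts)) E3).
      pose proof (f_equal (Rmult (ta*ts - k*ks)) HC).
      lra.
    + pose proof (f_equal (Rmult (k*k)) E1). pose proof (f_equal (Rmult (k*ta)) E5).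
      pose proof (f_equal (Rmult (ta*ta)) E3).
      pose proof (f_equal (Rmult (ta*ta - k*k)) HC).
      lra.
Qed.
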